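(* Let $n$ be a positive integer, let $A(n)=(a_{ij})_{i,j\in\mathbb{N}}$ be the greedy matrix described in the context, and let $k,r\geq 1$. Let $\overline{A}=A^{kr}$ be the partial matrix described in the context, and let $x$ be the number of ones in the $k$-th row of $\overline{A}$. Then the number of integers $l\geq 1$ such that the cell $(k,l)$ is a galf of $\overline{A}$ is at most $x n^2$.
   Context: $\mathbb{N}=\{1,2,3,\dots\}$. Fix a positive integer $n$. The infinite $\{0,1\}$-matrix $A(n)=(a_{ij})_{i,j\in\mathbb{N}}$ (the greedy matrix) is defined recursively. Its entries are determined row by row (row $1$ first), and within each row from left to right, so that $a_{kl}$ is determined after all $a_{ij}$ with $i<k$ and all $a_{kj}$ with $j<l$. One sets $a_{kl}=1$ if and only if all of the following hold: (1) $\sum_{j<l}a_{kj}<n+1$; (2) $\sum_{i<k}a_{il}<n+1$; (3) there is no pair $(i,j)$ with $1\le i<k$, $1\le j<l$ and $a_{ij}=a_{il}=a_{kj}=1$. Otherwise $a_{kl}=0$. For $k,r\ge 1$, $A^{kr}$ denotes the $\mathbb{N}\times\mathbb{N}$ matrix that agrees with $A(n)$ in all entries of rows $1,\dots,k-1$ and in the entries $(k,1),\dots,(k,r-1)$, and is $0$ in all other entries (the matrix constructed so far just before $a_{kr}$ is determined). For a $\{0,1\}$-matrix $M=(m_{ij})$, a cell $(i,j)$ is a flag if $m_{ij}=1$, and it is a galf of $M$ if there exists a flag $(k',l')$ of $M$ with $k'\neq i$, $l'\neq j$ and $m_{k'l'}=m_{k'j}=m_{il'}=1$. *)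

(* Defs.v *)
(* Matrices indexed by N = {1,2,...} are encoded as
   functions nat -> nat -> bool; index 0 is unused (always false). *)
From mathcomp Require Import all_boot.
Set Implicit Arguments. Unset Strict Implicit. Unset Printing Implicit Defensive.

Definition bmat := nat -> nat -> bool.

(* Condition for a_{kl} = 1, given the rows 1..k-1 (in M) and the entries
   a_{k1},...,a_{k,l-1} of the current row (in r). *)
Definition entry_ok (n : nat) (M : bmat) (r : nat -> bool) (k l : nat) : bool :=
  [&& (\sum_(1 <= j < l) r j < n.+1),
      (\sum_(1 <= i < k) M i l < n.+1) &
      ~~ [exists i : 'I_k, exists j : 'I_l,
            [&& 1 <= (i : nat), 1 <= (j : nat), M i j, M i l & r j]]].

Fixpoint row_upto (n : nat) (M : bmat) (k l : nat) : nat -> bool :=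
  match l with
  | 0 => fun _ => false
  | l'.+1 =>
      let r := row_upto n M k l' in
      if entry_ok n M r k l'.+1 then (fun j => (j == l'.+1) || r j) else r
  end.

Fixpoint mat_upto (n : nat) (k : nat) : bmat :=
  match k with
  | 0 => fun _ _ => false
  | k'.+1 =>
      let M := mat_upto n k' in
      fun i j => if i == k'.+1 then row_upto n M k'.+1 j j else M i j
  end.

Definition greedy (n : nat) : bmat := fun i j => mat_upto n i i j.

Definition partial (n k r : nat) : bmat :=
  fun i j => ((i < k) || ((i == k) && (j < r))) && greedy n i j.

Definition galf (M : bmat) (i j : nat) : Prop :=
  exists k' l', [/\ 1 <= k', 1 <= l', k' <> i, l' <> j &
                   [&& M k' l', M k' j & M i l']].

(* Main.v *)
Require Import Defs.
From mathcomp Require Import all_boot.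

Lemma sum_count (s : seq nat) (b : nat -> bool) :
  \sum_(i <- s) b i = count b s.
Proof. by elim: s => [|a s IH]; rewrite ?big_nil ?big_cons //= IH. Qed.

Lemma mat_stab n k i j : i <= k -> mat_upto n k i j = greedy n i j.
Proof.
rewrite /greedy; elim: k => [|k IH] Hi /=.
  by move: Hi; rewrite leqn0 => /eqP ->.
case: eqP => [->|/eqP Hne] //=; first by rewrite eqxx.
by apply: IH; rewrite -ltnS ltn_neqAle Hne Hi.
Qed.

Lemma greedyS n k j : greedy n k.+1 j = row_upto n (mat_upto n k) k.+1 j j.
Proof. by rewrite /greedy /= eqxx. Qed.

Lemma greedy0 n j : greedy n 0 j = false.
Proof. by []. Qed.

Lemma R0 n M k l j : l < j -> row_upto n M k l j = false.
Proof.
elim: l => [|l IH] Hj //=.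
case: entry_ok => //=; rewrite IH ?(ltnW Hj) // orbF.
by rewrite eq_sym ltn_eqF.
Qed.

Lemma Rstab n M k l j : j <= l -> row_upto n M k l j = row_upto n M k j j.
Proof.
elim: l => [|l IH] Hj; first by move: Hj; rewrite leqn0 => /eqP ->.
case: (eqVneq j l.+1) => [->//|Hne].
have Hjl : j <= l by rewrite -ltnS ltn_neqAle Hne.
by rewrite /= -(IH Hjl); case: entry_ok => //=; rewrite (negbTE Hne).
Qed.

Lemma Rsum n M k l : \sum_(1 <= j < l.+1) row_upto n M k l j <= n.+1.
Proof.
elim: l => [|l IH]; first by rewrite big_geq.
rewrite big_nat_recr //=.
case E: (entry_ok n M (row_upto n M k l) k l.+1).
  move: E => /andP [H1 _].
  rewrite eqxx /= addn1.
  suff -> : \sum_(1 <= i < l.+1) ((i == l.+1) || row_upto n M k l i) =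
     \sum_(1 <= j < l.+1) row_upto n M k l j by [].
  by apply: eq_big_nat => j /andP [_ Hj]; rewrite ltn_eqF.
by rewrite R0 // addn0.
Qed.

Lemma upper_bound (t : seq nat) : exists m, forall j, j \in t -> j <= m.
Proof.
exists (sumn t); elim: t => [|a t IH] j //=; rewrite inE => /orP [/eqP ->|H].
  exact: leq_addr.
by apply: leq_trans (IH _ H) (leq_addl _ _).
Qed.

Lemma row_bound n k t : uniq t -> (forall j, j \in t -> 1 <= j /\ greedy n k j) ->
  size t <= n.+1.
Proof.
move=> Ut Ht.
case: k Ht => [|K] Ht.
  by case: t Ut Ht => [|a t] //= _ H; case: (H a (mem_head _ _)).
have [m Hm] := upper_bound t.
pose R := row_upto n (mat_upto n K) K.+1 m.
apply: leq_trans (_ : count R (iota 1 m) <= n.+1).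
  rewrite -size_filter; apply: uniq_leq_size => // j Hj.
  have [H1 H2] := Ht j Hj.
  rewrite mem_filter mem_iota H1 add1n ltnS Hm //= /R Rstab ?Hm //.
  by rewrite andbT -greedyS.
by rewrite -sum_count; move: (Rsum n (mat_upto n K) K.+1 m); rewrite /index_iota subn1.
Qed.

Lemma col_bound n K l : 1 <= l -> greedy n K.+1 l ->
  count (fun i => greedy n i l) (iota 1 K) <= n.
Proof.
case: l => [|L] // _; rewrite greedyS /=.
case E: entry_ok; last by rewrite R0.
move=> _; move: E => /and3P [_ H _].
rewrite -ltnS -sum_count; apply: leq_trans H.
rewrite ltnS leq_eqVlt; apply/orP; left; apply/eqP.
rewrite /index_iota subn1 /=.
by apply: eq_big_seq => i; rewrite mem_iota => /andP [_ Hi]; rewrite mat_stab // -ltnS -(add1n K).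
Qed.

Lemma size_flatten_bound (T : eqType) (U : Type) (A : T -> seq U) (t : seq T) c :
  (forall x, x \in t -> size (A x) <= c) ->
  size (flatten (map A t)) <= size t * c.
Proof.
elim: t => [|a t IH] //= H.
rewrite size_cat mulSn leq_add ?H ?mem_head // IH // => x Hx.
by apply: H; rewrite inE Hx orbT.
Qed.

Theorem lemma3p1 (n k r : nat) (hn : 1 <= n) (hk : 1 <= k) (hr : 1 <= r)
  (s : seq nat) :
  uniq s ->
  (forall l, l \in s -> 1 <= l /\ galf (partial n k r) k l) ->
  size s <= (\sum_(1 <= j < (r.+1)) partial n k r k j) * n ^ 2.
Proof.
move=> Us Hs.
case: k hk Hs => [|K] // _ Hs.
pose X := filter (partial n K.+1 r K.+1) (iota 1 r).
pose Y := fun l' => filter (fun i => greedy n i l') (iota 1 K).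
pose Z := fun k' l' => filter (fun j => greedy n k' j && (j != l')) s.
have -> : \sum_(1 <= j < r.+1) partial n K.+1 r K.+1 j = size X.
  by rewrite size_filter -sum_count /index_iota subn1.
rewrite -mulnn.
apply: leq_trans (_ : size (flatten (map (fun l' =>
          flatten (map (fun k' => Z k' l') (Y l'))) X)) <= _).
  apply: uniq_leq_size => // l Hl.
  have [H1 [k' [l' [Hk' Hl' Hkk Hll /and3P [P1 P2 P3]]]]] := Hs l Hl.
  move: P3; rewrite /partial ltnn eqxx /= => /andP [Hlr Gl'].
  move: P1 P2; rewrite /partial (negbTE (introN eqP Hkk)) /= !orbF.
  move=> /andP [Hkk' G1] /andP [_ G2].
  apply/flatten_mapP; exists l'.
    by rewrite /X mem_filter /partial ltnn eqxx Hlr Gl' mem_iota Hl' add1n ltnS (ltnW Hlr).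
  apply/flatten_mapP; exists k'.
    by rewrite /Y mem_filter G1 mem_iota Hk' add1n.
  by rewrite /Z mem_filter G2 Hl andbT /=; apply/eqP => E; apply: Hll.
apply: size_flatten_bound => l' Hl'.
move: Hl'; rewrite mem_filter mem_iota /partial ltnn eqxx /= => /andP [/andP [_ Gl'] /andP [Hl' _]].
apply: leq_trans (@size_flatten_bound _ _ _ _ n _) _.
  move=> k' Hk'; move: Hk'; rewrite mem_filter mem_iota => /andP [G1 /andP [Hk' _]].
  rewrite -ltnS.
  have -> : (size (Z k' l')).+1 = size (l' :: Z k' l') by [].
  apply: (@row_bound n k').
    rewrite /= filter_uniq // andbT mem_filter eqxx.
    by rewrite andbF.
  move=> j; rewrite inE => /orP [/eqP -> //|].
  rewrite mem_filter => /andP [/andP [G _] Hj]; split => //.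
  by case: (Hs j Hj).
by rewrite leq_mul2r size_filter col_bound ?orbT.
Qed.
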